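(* Assume (A1), (A2), (B)$_T$ for every $T>0$, (C1), (C2) and (C3). Let $x\in E$, $\varepsilon>0$, and let $\sigma$ be an $\varepsilon$-optimal stopping time for $w(x)$. Then \[ \mathbb{E}^x\{\sigma\}\le\frac{\gamma(x)+\mathbb{E}^x\{\zeta^+\}-w(x)+\varepsilon}{-d(x)}. \]
   Context: Let $(E,\rho)$ be a locally compact metric space with Borel $\sigma$-field, and let $(X_t)_{t\ge0}$ be a Feller–Markov process with right-continuous paths on a filtered space $(\Omega,\mathcal F,(\mathcal F_t))$, taking values in $E$; $\mathbb{P}^x$ denotes the law of the process started at $x$ and $\mathbb{E}^x$ the corresponding expectation. Stopping times are with respect to $(\mathcal F_t)$ and may take the value $+\infty$. Write $P_t(x,\cdot)=\mathbb{P}^x\{X_t\in\cdot\}$, $P_t\phi(x)=\mathbb{E}^x\{\phi(X_t)\}$. (A1) $P_t\,\mathcal C_0\subseteq\mathcal C_0$ for all $t\ge0$, where $\mathcal C_0$ is the space of continuous bounded functions $E\to\mathbb R$ vanishing at infinity. (A2) There are a unique probability measure $\mu$ on $E$, a function $K:E\to(0,\infty)$ bounded on compacts and $h:[0,\infty)\to\mathbb R_+$ with $\int_0^\infty h<\infty$ such that $\|P_t(x,\cdot)-\mu\|_{TV}\le K(x)h(t)$ for all $x,t$; furthermore $\mathbb{E}^x\{K(X_T)\}<\infty$ for each $T\ge0$. Let $f:E\to\mathbb R$ be continuous and bounded and $g:E\to\mathbb R$ continuous (possibly unbounded). (B)$_T$: for every $x\in E$ there is a compact ball $\bar B(x,\delta)$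 such that $\zeta_T=\sup_{t\in[0,T]}|g(X_t)|$ satisfies $\lim_{n\to\infty}\sup_{y\in\bar B(x,\delta)}\mathbb{E}^y\{\zeta_T\mathbf 1_{\{\zeta_T>n\}}\}=0$. (C1) $\zeta^+:=\sup_{t\ge0}g^+(X_t)$ is $\mathbb{P}^x$-integrable for every $x$. (C2) For every $x$ and events $A_T\in\mathcal F_T$: if $\lim_{T\to\infty}\mathbb{P}^x(A_T)=0$ then $\lim_{T\to\infty}\mathbb{E}^x\{\mathbf 1_{A_T}g^-(X_T)\}=0$. (C3) For every $x$ there is $d(x)<0$ with $\gamma(x):=\sup_\tau\liminf_{T\to\infty}\mathbb{E}^x\{\int_0^{\tau\wedge T}(f(X_s)-d(x))ds\}<\infty$. The value function is $w(x)=\sup_\tau\liminf_{T\to\infty}\mathbb{E}^x\{\int_0^{\tau\wedge T}f(X_s)\,ds+g(X_{\tau\wedge T})\}$, supremum over all stopping times. A stopping time $\sigma$ is $\varepsilon$-optimal for $w(x)$ if $\liminf_{T\to\infty}\mathbb{E}^x\{\int_0^{\sigma\wedge T}f(X_s)ds+g(X_{\sigma\wedge T})\}\ge w(x)-\varepsilon$. *)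

(* Defs.v *)
From mathcomp Require Import all_boot all_order all_algebra all_classical all_reals all_analysis.
Import Order.TTheory GRing.Theory Num.Theory.
Import numFieldNormedType.Exports.
Set Implicit Arguments.
Unset Strict Implicit.
Unset Printing Implicit Defensive.
Local Open Scope classical_set_scope.
Local Open Scope ring_scope.

Section OptimalStoppingDefs.
Variables (R : realType) (E : pseudoPMetricType R).

Definition Borel := g_sigma_algebraType (@open E).

(* Closed ball {y | rho(x,y) <= r}. *)
Definition cball (x : E) (r : R) : set E :=
  [set y | forall e : R, r < e -> ball x e y].

Variables (d : measure_display) (Omega : measurableType d).

Definition filtration (F : R -> set (set Omega)) :=
  [/\ (forall t, 0 <= t -> sigma_algebra setT (F t)),
      (forall t, 0 <= t -> F t `<=` measurable) &
      (forall s t, 0 <= s -> s <= t -> F s `<=` F t)].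

Definition markov_process (F : R -> set (set Omega))
    (P : E -> probability Omega R) (X : R -> Omega -> E) :=
  [/\ filtration F,
      (forall t, 0 <= t -> forall B : set Borel, measurable B -> F t (X t @^-1` B)),
      (forall w t, 0 <= t -> (X ^~ w) s @[s --> t^'+] --> X t w),
      (forall x, P x [set w | X 0 w = x] = 1%E) &
      (forall x s t, 0 <= s -> 0 <= t -> forall A, F t A ->
         forall B : set Borel, measurable B ->
         P x (A `&` X (t + s) @^-1` B) =
         (\int[P x]_(w in A) P (X t w) (X s @^-1` B))%E)].

Definition stopping_time (F : R -> set (set Omega)) (tau : Omega -> \bar R) :=
  (forall w, (0 <= tau w)%E) /\
  (forall t, 0 <= t -> F t [set w | (tau w <= t%:E)%E]).

Definition stopT (tau : Omega -> \bar R) (T : R) (w : Omega) : R :=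
  fine (Order.min (tau w) T%:E).

Definition liminfT (u : R -> \bar R) : \bar R :=
  ereal_sup [set ereal_inf [set u T | T in [set T | M <= T]] | M in [set: R]].

Variables (P : E -> probability Omega R) (X : R -> Omega -> E).

Definition payoff (phi psi : E -> R) (x : E) (tau : Omega -> \bar R) (T : R)
  : \bar R :=
  (\int[P x]_w
     ((\int[lebesgue_measure]_(s in `[0%R, stopT tau T w]) (phi (X s w))%:E)
      + (psi (X (stopT tau T w) w))%:E))%E.

Definition value (F : R -> set (set Omega)) (phi psi : E -> R) (x : E) : \bar R :=
  ereal_sup [set liminfT (payoff phi psi x tau) | tau in stopping_time F].

Definition wfun F (f g : E -> R) (x : E) := value F f g x.

Definition gammafun F (f : E -> R) (dx : R) (x : E) :=
  value F (fun y => f y - dx) (fun _ => 0) x.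

Definition eps_optimal F (f g : E -> R) (x : E) (eps : R)
    (sigma : Omega -> \bar R) :=
  stopping_time F sigma /\
  (liminfT (payoff f g x sigma) >= wfun F f g x - eps%:E)%E.

Definition zeta_plus (g : E -> R) (w : Omega) : \bar R :=
  ereal_sup [set (Num.max (g (X t w)) 0)%:E | t in [set t : R | 0 <= t]].

Definition zetaT (g : E -> R) (T : R) (w : Omega) : \bar R :=
  ereal_sup [set (Num.norm (g (X t w)))%:E | t in `[0%R, T]].

Definition C0 (phi : E -> R) :=
  [/\ continuous phi,
      (exists M : R, forall y, `|phi y| <= M) &
      (forall e : R, 0 < e -> exists K : set E,
          compact K /\ forall y, ~ K y -> `|phi y| < e)].

Definition Pt (t : R) (phi : E -> R) (x : E) : R :=
  fine (\int[P x]_w (phi (X t w))%:E)%E.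

Definition A1 := forall t, 0 <= t -> forall phi, C0 phi -> C0 (Pt t phi).

Definition TVdist (x : E) (t : R) (mu : probability Borel R) : \bar R :=
  ereal_sup [set abse (P x (X t @^-1` A) - mu A)%E | A in (measurable : set (set Borel))].

Definition A2cond (mu : probability Borel R) (K : E -> R) (h : R -> R) :=
  [/\ (forall y, 0 < K y),
      (forall C : set E, compact C -> exists M : R, forall y, C y -> K y <= M),
      (forall t, 0 <= t -> 0 <= h t),
      lebesgue_measure.-integrable `[0%R, +oo[ (EFin \o h) &
      ((forall x t, 0 <= t -> (TVdist x t mu <= (K x * h t)%:E)%E) /\
       (forall x T, 0 <= T -> (\int[P x]_w (K (X T w))%:E < +oo)%E))].

Definition A2 (mu : probability Borel R) (K : E -> R) (h : R -> R) :=
  A2cond mu K h /\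
  (forall nu : probability Borel R, (exists K' h', A2cond nu K' h') ->
     forall A : set Borel, measurable A -> nu A = mu A).

Definition condB (g : E -> R) (T : R) :=
  forall x : E, exists delta : R, 0 < delta /\ compact (cball x delta) /\
    (fun n : nat => ereal_sup
       [set (\int[P y]_(w in [set w | (n%:R%:E < zetaT g T w)%E]) zetaT g T w)%E
       | y in cball x delta]) @ \oo --> 0%E.

Definition C1 (g : E -> R) := forall x, (P x).-integrable setT (zeta_plus g).

Definition C2 (F : R -> set (set Omega)) (g : E -> R) :=
  forall x (A : R -> set Omega), (forall T, 0 <= T -> F T (A T)) ->
    P x (A T) @[T --> +oo] --> 0%E ->
    (\int[P x]_(w in A T) (Num.max (- g (X T w)) 0)%:E)%E @[T --> +oo] --> 0%E.

(* (C3), with the choice x |-> d(x) made explicit *)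
Definition C3 F (f : E -> R) (dfun : E -> R) :=
  forall x, dfun x < 0 /\ (gammafun F f (dfun x) x < +oo)%E.

End OptimalStoppingDefs.

(* Main.v *)
Require Import Defs.
From mathcomp Require Import all_boot all_order all_algebra all_classical all_reals all_analysis.
From mathcomp Require Import measurable_realfun measurable_fun_approximation lebesgue_integral_fubini.
From mathcomp Require Import lra.
Import Order.TTheory GRing.Theory Num.Theory.
Import numFieldNormedType.Exports.
Local Open Scope classical_set_scope.
Local Open Scope ring_scope.


Lemma cont_meas (R : realType) (E : pseudoPMetricType R) (g : E -> R) :
  continuous g -> @measurable_fun _ _ (Borel E) R setT g.
Proof.
move=> cg; apply: (measurability _ (measurable_realfun.RGenOpens.measurableE R)).
move=> _ [_ [a [b ->] <-]]; apply: sub_sigma_algebra.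
rewrite setTI; apply: (continuousP _).1 => //; exact: interval_open.
Qed.




Lemma rc_joint (R : realType) d0 (T0 : measurableType d0) (phi : R -> T0 -> R) :
  (forall t, 0 <= t -> measurable_fun setT (phi t)) ->
  (forall w t, 0 <= t -> (fun s => phi s w) s @[s --> t^'+] --> phi t w) ->
  measurable_fun [set: T0 * R] (fun p => phi (Num.max p.2 0) p.1).
Proof.
move=> mphi rc.
pose u n (s : R) : R := n.+1%:R * Num.max s 0.
pose r n (k : nat) : R := k.+1%:R / n.+1%:R.
pose q n s := r n (Num.truncn (u n s)).
have u0 n s : 0 <= u n s by rewrite mulr_ge0 // le_max lexx orbT.
have mq n k : measurable [set p : T0 * R | Num.truncn (u n p.2) = k].
  have -> : [set p : T0 * R | Num.truncn (u n p.2) = k] =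
     snd @^-1` [set s | k%:R <= u n s < k.+1%:R].
    apply/seteqP; split => p /=; rewrite -Num.Theory.truncn_eq //; [by move=> ->|by move/eqP].
  rewrite -[X in measurable X]setTI; apply: measurable_snd => //.
  apply: measurable_realfun.is_interval_measurable => a b /= /andP[ha _] /andP[_ hb] z /andP[az zb].
  have hu : {homo u n : x y / x <= y}.
    by move=> x y xy; rewrite /u ler_pM2l // le_max2.
  apply/andP; split; first exact: le_trans ha (hu _ _ az).
  exact: le_lt_trans (hu _ _ zb) hb.
apply: (measurable_realfun.measurable_fun_cvg (h := fun n p => phi (q n p.2) p.1)).
- move=> n _ /= B mB.
  have -> : [set: T0 * R] `&` (fun p => phi (q n p.2) p.1) @^-1` B =
     \bigcup_k ([set p : T0 * R | Num.truncn (u n p.2) = k] `&`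
                 (fst @^-1` (phi (r n k) @^-1` B))).
    apply/seteqP; split => p /=.
      by move=> [_ hp]; exists (Num.truncn (u n p.2)) => //.
    by move=> [k _ [hk hp]]; split => //; rewrite /q hk.
  apply: bigcupT_measurable => k; apply: measurableI => //.
  rewrite -[X in measurable X]setTI; apply: measurable_fst => //.
  rewrite -[X in measurable X]setTI; apply: mphi => //.
  by rewrite /r divr_ge0.
- move=> [w s] _ /=.
  have t0 : 0 <= Num.max s 0 by rewrite le_max lexx orbT.
  have := rc w _ t0; move/cvg_at_rightP; apply; split.
  + move=> n; rewrite /q /r ltr_pdivlMr // mulrC; exact: Num.Theory.truncnS_gt.
  + apply: (@squeeze_cvgr _ _ _ _ (fun _ => Num.max s 0)
       (fun n => Num.max s 0 + harmonic n)).
    * near=> n; apply/andP; split.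
        by apply/ltW; rewrite /q /r ltr_pdivlMr // mulrC; exact: Num.Theory.truncnS_gt.
      rewrite /q /r /= ler_pdivrMr // mulrDl mulVf // mulrC.
      rewrite -natr1 lerD2r; have := Num.Theory.truncn_itv (u0 n s); case/andP => + _.
      by rewrite /u.
    * exact: cvg_cst.
    * rewrite -[X in _ --> X]addr0; apply: cvgD; first exact: cvg_cst.
      exact: cvg_harmonic.
Unshelve. all: by end_near.
Qed.



Lemma liminf_shift (R : realType) (u v : R -> \bar R) (k T0 : R) :
  (forall T, T0 <= T -> (u T + k%:E <= v T)%E) ->
  (liminfT u + k%:E <= liminfT v)%E.
Proof.
move=> uv; rewrite -leeBrDr //.
apply: ge_ereal_sup => _ [M _ <-].
pose M' := Num.max M T0.
apply: (@le_trans _ _ (ereal_inf [set u T | T in [set T | M' <= T]])).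
  apply: le_ereal_inf_tmp => _ [T /= hT <-]; apply: ereal_inf_lbound.
  by exists T => //=; apply: le_trans hT; rewrite le_max lexx.
rewrite leeBrDr //.
apply: (@le_trans _ _ (ereal_inf [set v T | T in [set T | M' <= T]])).
  apply: le_ereal_inf_tmp => _ [T /= hT <-].
  apply: le_trans (uv T _); last by apply: le_trans hT; rewrite le_max lexx orbT.
  rewrite leeD2r //; apply: ereal_inf_lbound; by exists T.
by apply: ereal_sup_ubound; exists M'.
Qed.

Lemma le_integral_m d (T : measurableType d) (R : realType)
  (mu : {measure set T -> \bar R}) (f h : T -> \bar R) :
  measurable_fun setT f -> measurable_fun setT h -> (forall x, (f x <= h x)%E) ->
  (\int[mu]_x f x <= \int[mu]_x h x)%E.
Proof.
move=> mf mh fh; rewrite [X in (X <= _)%E]integralE [X in (_ <= X)%E]integralE; apply: leeB.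
  apply: ge0_le_integral => //; [exact: measurable_funepos|exact: measurable_funepos|].
  by move=> y _; apply: (@funepos_le _ _ setT); [move=> z _; exact: fh|rewrite inE].
apply: ge0_le_integral => //; [exact: measurable_funeneg|exact: measurable_funeneg|].
by move=> y _; apply: (@funeneg_le _ _ setT); [move=> z _; exact: fh|rewrite inE].
Qed.



Lemma stopT_E (R : realType) d (Om : measurableType d) (tau : Om -> \bar R) T w :
  (0 <= tau w)%E -> 0 <= T -> (stopT tau T w)%:E = Order.min (tau w) T%:E.
Proof.
move=> t0 T0; rewrite /stopT; case: (tau w) t0 => [r||] //= r0.
  by rewrite -EFin_min.
Qed.

Lemma stopT_bounds (R : realType) d (Om : measurableType d) (tau : Om -> \bar R) T w :
  (0 <= tau w)%E -> 0 <= T -> 0 <= stopT tau T w <= T.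
Proof.
move=> t0 T0; rewrite -!lee_fin stopT_E // le_min t0 lee_fin T0 /=.
by rewrite ge_min lexx orbT.
Qed.

Lemma stopT_mono (R : realType) d (Om : measurableType d) (tau : Om -> \bar R) T1 T2 w :
  (0 <= tau w)%E -> 0 <= T1 -> T1 <= T2 -> stopT tau T1 w <= stopT tau T2 w.
Proof.
move=> t0 T10 T12; have T20 := le_trans T10 T12.
rewrite -lee_fin !stopT_E //; apply: le_min2 => //; by rewrite lee_fin.
Qed.

Lemma stopping_meas (R : realType) d (Om : measurableType d) (F : R -> set (set Om))
  (tau : Om -> \bar R) :
  (forall t, 0 <= t -> F t `<=` measurable) -> stopping_time F tau ->
  measurable_fun setT tau.
Proof.
move=> FM [t0 tF].
apply: (measurability _ (ErealGenOInfty.measurableE R)) => _ [_ [r ->] <-].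
rewrite setTI.
have [r0|r0] := leP 0 r.
  have -> : tau @^-1` `]r%:E, +oo[ = ~` [set w | (tau w <= r%:E)%E].
    apply/seteqP; split => w /=; rewrite in_itv /= andbT ltNge.
      by move/negP.
    by move/negP.
  by apply: measurableC; exact: FM r0 _ (tF r r0).
have -> : tau @^-1` `]r%:E, +oo[ = setT.
  apply/seteqP; split => w //= _; rewrite in_itv /= andbT.
  by apply: lt_le_trans (t0 w); rewrite lte_fin.
exact: measurableT.
Qed.

Lemma stopT_meas (R : realType) d (Om : measurableType d) (tau : Om -> \bar R) T :
  measurable_fun setT tau -> measurable_fun setT (stopT tau T).
Proof.
move=> mt; apply: measurableT_comp => //; apply: measurable_mine => //.
Qed.

Lemma stopT_cvg (R : realType) d (Om : measurableType d) (tau : Om -> \bar R) w :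
  (0 <= tau w)%E -> (fun n : nat => (stopT tau n%:R w)%:E) @ \oo --> tau w.
Proof.
move=> t0; case Ht: (tau w) t0 => [r||] // r0.
- apply: cvg_near_cst; near=> n.
  rewrite stopT_E ?Ht //; rewrite minEle lee_fin ifT //.
  near: n; exists (Num.truncn r).+1 => // n /= hn.
  apply: ltW; apply: lt_le_trans (truncnS_gt r) _; rewrite ler_nat; exact: hn.
- have -> : (fun n : nat => (stopT tau n%:R w)%:E) = (fun n : nat => n%:R%:E).
    by apply/funext => n; rewrite stopT_E ?Ht // minEle leye_eq.
  by apply/cvgenyP.
Unshelve. all: by end_near.
Qed.



Lemma sec_meas (R : realType) d (Om : measurableType d) (phi : R -> Om -> R) (w : Om) (a : R) :
  measurable_fun [set: Om * R] (fun p => phi (Num.max p.2 0) p.1) ->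
  measurable_fun `[0%R, a] (fun s => phi s w).
Proof.
move=> mj; have := measurable_fun_pair2 w mj => /= m2.
have m3 : measurable_fun `[0%R, a] (fun s => phi (Num.max s 0) w).
  exact: measurable_funS m2.
move: m3; apply: eq_measurable_fun.
by move=> s; rewrite inE /= in_itv /= => /andP[s0 _]; rewrite max_l.
Qed.

Lemma I_meas (R : realType) d (Om : measurableType d) (phi : R -> Om -> R) (S : Om -> R) :
  measurable_fun [set: Om * R] (fun p => phi (Num.max p.2 0) p.1) ->
  measurable_fun setT S ->
  measurable_fun setT
    (fun w => \int[lebesgue_measure]_(s in `[0%R, S w]) (phi s w)%:E)%E.
Proof.
move=> mj mS.
pose u (p : Om * R) : \bar R :=
  if (0 <= p.2) && (p.2 <= S p.1) then (phi (Num.max p.2 0) p.1)%:E else 0%E.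
have mu : measurable_fun setT u.
  apply: measurable_fun_ifT.
  - apply: measurable_and; apply: measurable_fun_ler => //.
    exact: measurableT_comp.
  - exact/measurable_EFinP.
  - exact: measurable_cst.
have -> : (fun w => \int[lebesgue_measure]_(s in `[0%R, S w]) (phi s w)%:E)%E =
   (fun w => \int[lebesgue_measure]_s (funepos u (w, s)) - \int[lebesgue_measure]_s (funeneg u (w, s)))%E.
  apply/funext => w; rewrite integral_mkcond.
  have -> : ((fun s => (phi s w)%:E) \_ `[0%R, S w]) = (fun s => u (w, s)).
    apply/funext => s; rewrite /patch /u /= mem_setE in_itv /=.
    by case: ifP => [/andP[s0 _]|//]; rewrite max_l.
  rewrite integralE; congr (_ - _)%E; apply: eq_integral => s _; by rewrite ?funeposE ?funenegE.
have h1 := measurable_fun_fubini_tonelli_F (m2 := lebesgue_measure) (funepos u)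
  (measurable_funepos mu) (fun p => funepos_ge0 u p).
have h2 := measurable_fun_fubini_tonelli_F (m2 := lebesgue_measure) (funeneg u)
  (measurable_funeneg mu) (fun p => funeneg_ge0 u p).
exact: (emeasurable_funB h1 h2).
Qed.

Lemma lebesgue_cc (R : realType) (a : R) : 0 <= a ->
  lebesgue_measure (`[0%R, a] : set R) = a%:E.
Proof.
move=> a0; rewrite lebesgue_measure_itv /=; case: ifPn.
  by rewrite lte_fin => _; rewrite sube0.
by rewrite lte_fin -leNgt => ha; apply/esym; congr (_%:E); apply/le_anti; rewrite ha a0.
Qed.

Lemma I_int (R : realType) d (Om : measurableType d) (phi : R -> Om -> R) (M a : R) (w : Om) :
  measurable_fun [set: Om * R] (fun p => phi (Num.max p.2 0) p.1) ->
  (forall s, `|phi s w| <= M) -> 0 <= a ->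
  lebesgue_measure.-integrable `[0%R, a] (EFin \o (fun s => phi s w)).
Proof.
move=> mj bd a0; apply: measurable_bounded_integrable => //.
- by apply: (@le_lt_trans _ _ a%:E); [rewrite le_eqVlt; apply/orP; left; apply/eqP; exact: lebesgue_cc|exact: ltry].
- exact: sec_meas.
- exists M; split; first exact: num_real.
  move=> y My s _; apply: le_trans (bd s) _; exact: ltW.
Qed.



Lemma I_bound (R : realType) d (Om : measurableType d) (phi : R -> Om -> R) (M a : R) (w : Om) :
  measurable_fun [set: Om * R] (fun p => phi (Num.max p.2 0) p.1) ->
  (forall s, `|phi s w| <= M) -> 0 <= a ->
  (`| \int[lebesgue_measure]_(s in `[0%R, a]) (phi s w)%:E | <= (M * a)%:E)%E.
Proof.
move=> mj bd a0.
have mE : measurable_fun `[0%R, a] (fun s => (phi s w)%:E).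
  by apply: measurableT_comp => //; exact: sec_meas.
apply: le_trans (@le_abse_integral _ _ _ lebesgue_measure `[0%R, a]
   (fun s => (phi s w)%:E) (measurable_itv _) mE) _.
have -> : (M * a)%:E = (\int[lebesgue_measure]_(s in `[0%R, a]) M%:E)%E.
  by rewrite integral_cst //= lebesgue_cc // -EFinM.
apply: ge0_le_integral => //.
- by apply: measurableT_comp => //.
- by move=> s _; rewrite lee_fin (le_trans _ (bd s)).
Qed.

Lemma I_shift (R : realType) d (Om : measurableType d) (phi : R -> Om -> R) (M a k : R) (w : Om) :
  measurable_fun [set: Om * R] (fun p => phi (Num.max p.2 0) p.1) ->
  (forall s, `|phi s w| <= M) -> 0 <= a ->
  (\int[lebesgue_measure]_(s in `[0%R, a]) (phi s w - k)%:E + 0%:E =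
   \int[lebesgue_measure]_(s in `[0%R, a]) (phi s w)%:E + ((- k) * a)%:E)%E.
Proof.
move=> mj bd a0; rewrite adde0.
rewrite (_ : (fun s => (phi s w - k)%:E) = (fun s => (phi s w)%:E - (k)%:E)%E); last first.
  by apply/funext => s; rewrite EFinB.
have i1 := @I_int R d Om phi M a w mj bd a0.
have i2 : lebesgue_measure.-integrable `[0%R, a] (EFin \o (fun _ : R => k)).
  exact: (@I_int R d Om (fun _ _ => k) `|k| a w (measurable_cst _) (fun _ => lexx _) a0).
rewrite (integralB_EFin _ i1 i2) //.
by rewrite integral_cst //= lebesgue_cc // mulNr EFinN -EFinM.
Qed.


Theorem mainTheorem12 (R : realType) (E : pseudoPMetricType R)
  (dO : measure_display) (Omega : measurableType dO)
  (F : R -> set (set Omega)) (P : E -> probability Omega R)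
  (X : R -> Omega -> E)
  (mu : probability (Borel E) R) (K : E -> R) (h : R -> R)
  (f g : E -> R) (dfun : E -> R) :
  hausdorff_space E -> locally_compact [set: E] ->
  markov_process F P X ->
  A1 P X -> A2 P X mu K h ->
  continuous f -> (exists M : R, forall y, `|f y| <= M) ->
  continuous g ->
  (forall T : R, 0 < T -> condB P X g T) ->
  C1 P X g -> C2 P X F g -> C3 P X F f dfun ->
  forall (x : E) (eps : R) (sigma : Omega -> \bar R), 0 < eps ->
  eps_optimal P X F f g x eps sigma ->
  (\int[P x]_w sigma w <=
   (gammafun P X F f (dfun x) x + \int[P x]_w zeta_plus X g w
    - wfun P X F f g x + eps%:E) * ((- dfun x)^-1)%:E)%E.
Proof.
move=> _ _ [[FS FM _] XF Xrc _ _] _ _ cf [M fM] cg _ C1g _ C3 x eps sigma eps0 [st opt].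
have [dneg gfin] := C3 x.
set G := gammafun P X F f (dfun x) x in gfin *.
set W := wfun P X F f g x in opt *.
set Z := (\int[P x]_w zeta_plus X g w)%E.
set c := - dfun x.
have c0 : 0 < c by rewrite oppr_gt0.
have mX t : 0 <= t -> @measurable_fun _ _ Omega (Borel E) setT (X t).
  by move=> t0 _ B mB; rewrite setTI; exact: FM t0 _ (XF t t0 B mB).
have mphi (k : E -> R) : continuous k -> forall t, 0 <= t ->
    measurable_fun setT (fun w => k (X t w)).
  move=> ck t t0.
  exact: (@measurableT_comp _ _ _ Omega (Borel E) R k setT (X t) (@cont_meas R E k ck) (mX t t0)).
have rck (k : E -> R) : continuous k -> forall w t, 0 <= t ->
    (fun s => k (X s w)) s @[s --> t^'+] --> k (X t w).
  by move=> ck w t t0; exact: cvg_comp (Xrc w t t0) (ck _).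
have jf := @rc_joint R _ Omega (fun s w => f (X s w)) (mphi f cf) (rck f cf).
have jg := @rc_joint R _ Omega (fun s w => g (X s w)) (mphi g cg) (rck g cg).
have ms := @stopping_meas R _ Omega F sigma FM st.
have s0 w : (0 <= sigma w)%E := st.1 w.
pose S T := stopT sigma T.
have mS T : measurable_fun setT (S T) := @stopT_meas R _ Omega sigma T ms.
have Sb T w : 0 <= T -> 0 <= S T w <= T := fun T0 => @stopT_bounds R _ Omega sigma T w (s0 w) T0.
pose I T w := (\int[lebesgue_measure]_(s in `[0%R, S T w]) (f (X s w))%:E)%E.
have mI T : measurable_fun setT (I T) := @I_meas R _ Omega (fun s w => f (X s w)) (S T) jf (mS T).
have M0 : 0 <= M := le_trans (normr_ge0 _) (fM x).
have Ib T w : 0 <= T -> (`|I T w| <= (M * T)%:E)%E.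
  move=> T0; have /andP[h0 h1] := Sb T w T0.
  apply: le_trans (@I_bound R _ Omega (fun s w => f (X s w)) M (S T w) w jf (fun s => fM _) h0) _.
  by rewrite lee_fin ler_wpM2l.
have Ifin T w : 0 <= T -> I T w \is a fin_num.
  by move=> T0; move: (Ib T w T0); case: (I T w).
have iI T : 0 <= T -> (P x).-integrable setT (I T).
  move=> T0; apply: (@le_integrable _ _ _ (P x) setT measurableT (I T) (fun _ => (M * T)%:E)%E (mI T)).
    move=> w _; rewrite (@gee0_abs _ (M * T)%:E) ?lee_fin ?mulr_ge0 //; exact: Ib.
  exact: finite_measure_integrable_cst.
have iS T : 0 <= T -> (P x).-integrable setT (EFin \o S T).
  move=> T0; apply: (@le_integrable _ _ _ (P x) setT measurableT (EFin \o S T) (fun _ => T%:E)%E).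
  - exact/measurable_EFinP.
  - move=> w _ /=; have /andP[h0 h1] := Sb T w T0.
    by rewrite lee_fin !ger0_norm // (le_trans h0 h1).
  exact: finite_measure_integrable_cst.
have hPZ T : 0 <= T -> payoff P X (fun y => f y - dfun x) (fun _ => 0) x sigma T =
    (\int[P x]_w I T w + c%:E * \int[P x]_w (S T w)%:E)%E.
  move=> T0; rewrite /payoff.
  rewrite (eq_integral (fun w => I T w + (c * S T w)%:E)%E); last first.
    move=> w _; have /andP[h0 _] := Sb T w T0.
    exact: (@I_shift R _ Omega (fun s w => f (X s w)) M (S T w) (dfun x) w jf (fun s => fM _) h0).
  rewrite integralD //; [|exact: iI|exact: (@integrableZl _ _ _ (P x) setT measurableT c _ (iS T T0))].
  congr (_ + _)%E; rewrite -integralZl //; exact: iS.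
have mgS T : 0 <= T -> measurable_fun setT (fun w => g (X (S T w) w)).
  move=> T0.
  have := measurableT_comp jg (measurable_fun_pair (@measurable_id _ Omega setT) (mS T)).
  apply: eq_measurable_fun => w _ /=.
  by have /andP[h0 _] := Sb T w T0; rewrite max_l.
have hPY T : 0 <= T -> (payoff P X f g x sigma T <= \int[P x]_w I T w + Z)%E.
  move=> T0; rewrite /payoff /Z -integralD //; [|exact: iI|exact: C1g].
  apply: (@le_integral_m _ _ _ (P x)).
  - apply: emeasurable_funD; first exact: mI.
    change (measurable_fun setT (EFin \o (fun w => g (X (S T w) w)))).
    exact/measurable_EFinP/mgS.
  - apply: emeasurable_funD; first exact: mI.
    exact: measurable_int (C1g x).
  - move=> w; apply: leeD2l; rewrite /zeta_plus.
    apply: (@le_trans _ _ (Num.max (g (X (S T w) w)) 0)%:E); first by rewrite lee_fin le_max lexx.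
    apply: ereal_sup_ubound; exists (S T w) => //.
    by case/andP: (Sb T w T0).
have Zfin : Z \is a fin_num by exact: integrable_fin_num (C1g x).
have Sfin T : 0 <= T -> (\int[P x]_w (S T w)%:E)%E \is a fin_num.
  by move=> T0; exact: integrable_fin_num (iS T T0).
have Smono T1 T2 : 0 <= T1 -> T1 <= T2 ->
    (\int[P x]_w (S T1 w)%:E <= \int[P x]_w (S T2 w)%:E)%E.
  move=> T10 T12; apply: ge0_le_integral => //.
  - by move=> w _; rewrite lee_fin; case/andP: (Sb T1 w T10).
  - exact/measurable_EFinP.
  - exact/measurable_EFinP.
  - by move=> w _; rewrite lee_fin; exact: (@stopT_mono R _ Omega sigma T1 T2 w (s0 w) T10 T12).
have leG tau : stopping_time F tau ->
    (liminfT (payoff P X (fun y => (f y - dfun x)%R) (fun _ => 0%R) x tau) <= G)%E.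
  by move=> sttau; rewrite /G /gammafun /value; apply: ereal_sup_ubound; exists tau.
have key T0 : 0 <= T0 ->
    (W - eps%:E + (- Z + c%:E * \int[P x]_w (S T0 w)%:E) <= G)%E.
  move=> T00.
  have kfin : (- Z + c%:E * \int[P x]_w (S T0 w)%:E)%E \is a fin_num.
    by rewrite fin_numD fin_numN Zfin fin_numM // Sfin.
  rewrite -(fineK kfin).
  apply: le_trans (leG _ st).
  apply: le_trans (@liminf_shift R _ _ (fine (- Z + c%:E * \int[P x]_w (S T0 w)%:E)%E) T0 _).
    apply: leeD2r; exact: opt.
  move=> T hT; have T0' := le_trans T00 hT.
  rewrite fineK // hPZ // addeA.
  apply: le_trans (_ : (\int[P x]_w I T w + c%:E * \int[P x]_w (S T0 w)%:E <= _)%E).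
    apply: leeD2r; rewrite leeBlDr //; exact: hPY.
  apply: leeD2l; apply: lee_wpmul2l; first by rewrite lee_fin ltW.
  exact: Smono.
have st0 : stopping_time F (fun _ : Omega => 0%E).
  split => // t t0.
  have -> : [set w : Omega | (0 <= t%:E)%E] = setT.
    by apply/seteqP; split => w //= _; rewrite lee_fin.
  have [h1 h2 _] := FS t t0; rewrite -(setD0 setT); exact: h2 _ h1.
have jfd : measurable_fun [set: Omega * R]
    (fun p => f (X (Num.max p.2 0) p.1) - dfun x).
  by apply: measurable_funB => //.
have G0 : (0 <= G)%E.
  apply: le_trans (leG _ st0).
  apply: (@le_trans _ _ (ereal_inf [set payoff P X (fun y => (f y - dfun x)%R) (fun _ => 0%R) x
            (fun _ => 0%E) T | T in [set T | 0 <= T]])); last first.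
    by apply: ereal_sup_ubound; exists 0.
  apply: le_ereal_inf_tmp => _ [T /= T0 <-].
  rewrite /payoff; apply: integral_ge0 => w _.
  have -> : stopT (fun _ : Omega => 0%E) T w = 0.
    by rewrite /stopT /= minEle lee_fin T0.
  have := @I_bound R _ Omega (fun s w => f (X s w) - dfun x) (M + `|dfun x|) 0 w jfd
    (fun s => le_trans (ler_normB _ _) (lerD (fM _) (lexx _))) (lexx _).
  rewrite mulr0 adde0.
  case: (\int[lebesgue_measure]_(s in `[0%R, 0%R]) (f (X s w) - dfun x)%:E)%E => //= r.
  by rewrite lee_fin normr_le0 => /eqP ->.
have Gfin : G \is a fin_num by rewrite ge0_fin_numE.
case HW: W => [w||].
- have bnd n : (\int[P x]_w (S n%:R w)%:E <=
      ((fine G + fine Z - w + eps) * c^-1)%:E)%E.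
    have hh := key n%:R (ler0n _ _).
    rewrite HW -(fineK Gfin) -(fineK Zfin) -(fineK (Sfin n%:R (ler0n _ _))) in hh.
    rewrite -EFinN -EFinM -!EFinB -EFinD lee_fin in hh.
    rewrite -(fineK (Sfin n%:R (ler0n _ _))) lee_fin ler_pdivlMr // mulrC; lra.
  have mSE n : measurable_fun setT (fun w => (S n%:R w)%:E) by exact/measurable_EFinP.
  have mct := @monotone_convergence _ _ _ (P x) setT measurableT
    (fun n w => (S n%:R w)%:E)
    mSE
    (fun n w _ => proj1 (elimT andP (Sb n%:R w (ler0n _ _))))
    (fun w _ m n mn => @stopT_mono R _ Omega sigma m%:R n%:R w (s0 w) (ler0n _ _) (ltac:(by rewrite ler_nat))).
  rewrite (eq_integral (fun w => limn (fun n : nat => (S n%:R w)%:E))); last first.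
    by move=> w0 _; apply/esym/cvg_lim => //; exact: (@stopT_cvg R _ Omega sigma w0 (s0 w0)).
  rewrite mct -(fineK Gfin) -(fineK Zfin).
  rewrite (_ : (((fine G)%:E + (fine Z)%:E - w%:E + eps%:E) * (c^-1)%:E =
      ((fine G + fine Z - w + eps) * c^-1)%:E)%E) //.
  apply: lime_le.
    apply: ereal_nondecreasing_is_cvgn => m n mn; apply: Smono => //.
    by rewrite ler_nat.
  by apply: nearW => n; exact: bnd.
- have := key 0 (lexx 0); rewrite HW.
  rewrite -(fineK Zfin) -(fineK (Sfin 0 (lexx 0))) -EFinN -EFinM -EFinD.
  rewrite addye //= leye_eq => /eqP Goo; by rewrite Goo in gfin.
- rewrite -(fineK Gfin) -(fineK Zfin) -EFinD /= addey // addye // gt0_mulye ?leey //.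
  by rewrite lte_fin invr_gt0.
Qed.
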